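(* Let $0<q<1$ and let $\alpha,\beta>-1$ be real. For every integer $n\ge 1$ and every $x\in\mathbb C$, \begin{align*} &(1-2xq^{\alpha+1/2}+q^{2\alpha+1})(1+2xq^{\beta+1/2}+q^{2\beta+1})\,P_{n-1}^{(\alpha+1,\beta+1)}(x;q)\\ &=\frac{(1+q^{\alpha+\beta+n})(1+q^{\alpha+\beta+n+1})(1+q^{\alpha+n})(1+q^{\beta+n})(1-q^{\alpha+n})(1-q^{\beta+n})}{(1-q^{2n+\alpha+\beta})(1-q^{2n+\alpha+\beta+1})}\,P_{n-1}^{(\alpha,\beta)}(x;q)\\ &\quad+\frac{(1+q^{\alpha+\beta+n+1})(1+q^{\alpha+\beta+2n+1})(1+q^{n})^2(1-q^{n})(1-q^{\alpha-\beta})}{(1-q^{2n+\alpha+\beta})(1-q^{2n+\alpha+\beta+2})}\,q^{\beta}\,P_{n}^{(\alpha,\beta)}(x;q)\\ &\quad-\frac{(1+q^{n})^2(1+q^{n+1})^2(1-q^{n})(1-q^{n+1})}{(1-q^{2n+\alpha+\beta+1})(1-q^{2n+\alpha+\beta+2})}\,q^{\alpha+\beta}\,P_{n+1}^{(\alpha,\beta)}(x;q). \end{align*}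
   Context: Notation: for $a\in\mathbb C$, $(a;q)_0=1$, $(a;q)_n=\prod_{j=0}^{n-1}(1-aq^j)$, $(a;q)_\infty=\prod_{j\ge0}(1-aq^j)$, and $(a_1,\dots,a_m;q)_n=\prod_{k=1}^m(a_k;q)_n$. The basic hypergeometric series is ${}_r\phi_s(a_1,\dots,a_r;b_1,\dots,b_s;q,z)=\sum_{k\ge0}\frac{(a_1,\dots,a_r;q)_k}{(q,b_1,\dots,b_s;q)_k}\big[(-1)^kq^{k(k-1)/2}\big]^{1+s-r}z^k$. For $x=\cos\theta$, the continuous $q$-Jacobi polynomials in Rahman's normalization are $$P_n^{(\alpha,\beta)}(x;q)=\frac{(q^{\alpha+1},-q^{\beta+1};q)_n}{(q,-q;q)_n}\,{}_4\phi_3\!\left(q^{-n},q^{n+\alpha+\beta+1},q^{1/2}e^{i\theta},q^{1/2}e^{-i\theta};\,q^{\alpha+1},-q^{\beta+1},-q;\,q,q\right),$$ a polynomial of degree $n$ in $x$ (the terminating series depends on $\theta$ only through $x$, so it extends to all $x\in\mathbb C$). *)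

(* Defs.v *)
From Stdlib Require Import Reals.
From Coquelicot Require Import Coquelicot.
Open Scope R_scope.

Definition qpow (q a : R) : R := Rpower q a.

Fixpoint qpoch (a q : R) (n : nat) : R :=
  match n with
  | O => 1
  | S m => qpoch a q m * (1 - a * q ^ m)
  end.

(* (q^{1/2} e^{i theta}, q^{1/2} e^{-i theta}; q)_k written through x = cos theta:
   prod_{j<k} (1 - q^{j+1/2} e^{i theta})(1 - q^{j+1/2} e^{-i theta})
   = prod_{j<k} (1 - 2 x q^{j+1/2} + q^{2j+1}); this is the polynomial
   extension to all complex x. *)
Fixpoint qpoch_cos (x : C) (q : R) (k : nat) : C :=
  match k with
  | O => RtoC 1
  | S m => Cmult (qpoch_cos x q m)
             (Cplus (Cminus (RtoC 1)
                        (Cmult (RtoC (2 * qpow q (INR m + / 2))) x))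
                    (RtoC (q ^ (2 * m + 1))))
  end.

Fixpoint csum (f : nat -> C) (n : nat) : C :=
  match n with
  | O => f O
  | S m => Cplus (csum f m) (f (S m))
  end.

(* k-th term of the terminating 4phi3 series
   4phi3(q^{-n}, q^{n+al+be+1}, q^{1/2}e^{i th}, q^{1/2}e^{-i th};
         q^{al+1}, -q^{be+1}, -q; q, q) *)
Definition phi43_term (q al be : R) (n : nat) (x : C) (k : nat) : C :=
  Cmult (RtoC (qpoch (qpow q (- INR n)) q k
               * qpoch (qpow q (INR n + al + be + 1)) q k
               / (qpoch q q k * qpoch (qpow q (al + 1)) q k
                  * qpoch (- qpow q (be + 1)) q k * qpoch (- q) q k)
               * q ^ k))
        (qpoch_cos x q k).

(* Continuous q-Jacobi polynomial, Rahman's normalization, at x = cos theta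
   (extended polynomially to all complex x). *)
Definition qJacobiP (q al be : R) (n : nat) (x : C) : C :=
  Cmult (RtoC (qpoch (qpow q (al + 1)) q n * qpoch (- qpow q (be + 1)) q n
               / (qpoch q q n * qpoch (- q) q n)))
        (csum (phi43_term q al be n x) n).

(* Main.v *)
Require Import Defs.
From Stdlib Require Import Reals Lra Lia Field.
From Coquelicot Require Import Coquelicot.
Open Scope R_scope.

Definition Ssum (a : nat -> R) (x : C) (q : R) (m : nat) : C :=
  csum (fun k => Cmult (RtoC (a k)) (qpoch_cos x q k)) m.

Definition shift (q c : R) (a : nat -> R) (k : nat) : R :=
  (1 - c / q^k) * (1 - c * q^(S k)) * a k
  + match k with O => 0 | S j => c / q^j * a j end.

Lemma qp_add q a b : qpow q (a + b) = qpow q a * qpow q b.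
Proof. unfold qpow; apply Rpower_plus. Qed.
Lemma qp_nat q m : 0 < q -> qpow q (INR m) = q ^ m.
Proof. intros; unfold qpow; apply Rpower_pow; auto. Qed.
Lemma qp_1 q : 0 < q -> qpow q 1 = q.
Proof. intros; unfold qpow; apply Rpower_1; auto. Qed.
Lemma qp_opp q a : qpow q (- a) = / qpow q a.
Proof. unfold qpow; apply Rpower_Ropp. Qed.
Lemma qp_pos q a : 0 < qpow q a.
Proof. unfold qpow, Rpower; apply exp_pos. Qed.
Lemma qp_lt1 q a : 0 < q -> q < 1 -> 0 < a -> qpow q a < 1.
Proof.
  intros h0 h1 ha. unfold qpow, Rpower. rewrite <- exp_0. apply exp_increasing.
  assert (ln q < 0) by (rewrite <- ln_1; apply ln_increasing; lra). nra.
Qed.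

Lemma phi_S x q k : 0 < q ->
  qpoch_cos x q (S k) = Cmult (qpoch_cos x q k)
    (Cplus (Cminus (RtoC 1) (Cmult (RtoC (q ^ k)) (Cmult (RtoC (2 * qpow q (/ 2))) x)))
           (RtoC (q ^ k * q ^ k * q))).
Proof.
  intros hq. simpl qpoch_cos at 1.
  rewrite qp_add, qp_nat by auto.
  assert (E : forall j, q ^ j = q ^ j) by auto.
  f_equal. f_equal.
  - f_equal. rewrite !RtoC_mult. ring.
  - f_equal. rewrite !pow_add. simpl. ring.
Qed.

Lemma csum_S f m : csum f (S m) = Cplus (csum f m) (f (S m)).
Proof. reflexivity. Qed.

Lemma mulL x q c a m : 0 < q ->
  Cmult (Cplus (Cminus (RtoC 1) (Cmult (RtoC c) (Cmult (RtoC (2 * qpow q (/ 2))) x)))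
               (RtoC (c * c * q))) (Ssum a x q m)
  = Cplus (Ssum (shift q c a) x q m)
          (Cmult (RtoC (c / q ^ m * a m)) (qpoch_cos x q (S m))).
Proof.
  intros hq. set (z := Cmult (RtoC (2 * qpow q (/ 2))) x).
  assert (hp : forall k, q ^ k <> 0) by (intro; apply pow_nonzero; lra).
  induction m as [|m IH].
  - unfold Ssum, csum. rewrite phi_S by auto. fold z.
    replace (qpoch_cos x q 0) with (RtoC 1) by reflexivity.
    unfold shift. destruct z as [z1 z2].
    apply injective_projections; simpl; field.
  - unfold Ssum in *; rewrite !csum_S. rewrite Cmult_plus_distr_l, IH.
    rewrite (phi_S x q (S m)) by auto. fold z.
    generalize (csum (fun k : nat => Cmult (RtoC (shift q c a k)) (qpoch_cos x q k)) m).
    intro W. unfold shift.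
    destruct (qpoch_cos x q (S m)) as [p1 p2]. destruct z as [z1 z2]. destruct W as [w1 w2].
    pose proof (hp m). assert (q <> 0) by lra.
    apply injective_projections; simpl; field; auto.
Qed.

Lemma Ssum_ext0 a x q m : a (S m) = 0 -> Ssum a x q (S m) = Ssum a x q m.
Proof. intro h. unfold Ssum. rewrite csum_S, h. ring. Qed.

Lemma Ssum_ext a b x q m : (forall k, a k = b k) -> Ssum a x q m = Ssum b x q m.
Proof. intro h. unfold Ssum. induction m; [simpl; rewrite h; auto|]. rewrite !csum_S, IHm, h. auto. Qed.

Lemma Ssum_lin r1 r2 r3 a b c x q m :
  Cminus (Cplus (Cmult (RtoC r1) (Ssum a x q m)) (Cmult (RtoC r2) (Ssum b x q m)))
         (Cmult (RtoC r3) (Ssum c x q m))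
  = Ssum (fun k => r1 * a k + r2 * b k - r3 * c k) x q m.
Proof.
  unfold Ssum. induction m.
  - simpl. rewrite RtoC_minus, RtoC_plus, !RtoC_mult. ring.
  - rewrite !csum_S, <- IHm. rewrite RtoC_minus, RtoC_plus, !RtoC_mult. ring.
Qed.

Definition coefJ q al be n k :=
  (qpoch (qpow q (al + 1)) q n * qpoch (- qpow q (be + 1)) q n / (qpoch q q n * qpoch (- q) q n))
  * (qpoch (qpow q (- INR n)) q k * qpoch (qpow q (INR n + al + be + 1)) q k
     / (qpoch q q k * qpoch (qpow q (al + 1)) q k * qpoch (- qpow q (be + 1)) q k * qpoch (- q) q k)
     * q ^ k).

Lemma csum_scal c f g N :
  Cmult (RtoC c) (csum (fun k => Cmult (RtoC (f k)) (g k)) N)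
  = csum (fun k => Cmult (RtoC (c * f k)) (g k)) N.
Proof.
  induction N.
  - simpl. rewrite RtoC_mult. ring.
  - rewrite !csum_S, Cmult_plus_distr_l, IHN. rewrite (RtoC_mult c). ring.
Qed.

Lemma qJ_Ssum q al be n x : qJacobiP q al be n x = Ssum (coefJ q al be n) x q n.
Proof.
  unfold qJacobiP, Ssum, coefJ, phi43_term. apply csum_scal.
Qed.

Lemma qpochS a q k : qpoch a q (S k) = qpoch a q k * (1 - a * q ^ k).
Proof. reflexivity. Qed.

Lemma qpoch_vanish q m d : 0 < q -> qpoch (qpow q (- INR m)) q (S m + d) = 0.
Proof.
  intro hq. induction d.
  - rewrite Nat.add_0_r, qpochS, qp_opp, qp_nat by auto.
    field_simplify; [ring | apply pow_nonzero; lra].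
  - rewrite Nat.add_succ_r, qpochS, IHd. ring.
Qed.

Lemma coefJ_vanish q al be m k : 0 < q -> (m < k)%nat -> coefJ q al be m k = 0.
Proof.
  intros hq hk. replace k with (S m + (k - S m))%nat by lia.
  unfold coefJ. rewrite qpoch_vanish by auto. unfold Rdiv. ring.
Qed.

Lemma mulL' x q c a m : 0 < q -> a (S m) = 0 ->
  Cmult (Cplus (Cminus (RtoC 1) (Cmult (RtoC c) (Cmult (RtoC (2 * qpow q (/ 2))) x)))
               (RtoC (c * c * q))) (Ssum a x q m)
  = Ssum (shift q c a) x q (S m).
Proof.
  intros hq h. rewrite mulL by auto. unfold Ssum at 2. rewrite csum_S. fold (Ssum (shift q c a) x q m).
  f_equal. f_equal. f_equal. unfold shift. rewrite h. ring.
Qed.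

Lemma qp_2 q a : qpow q (2 * a) = qpow q a * qpow q a.
Proof. replace (2 * a) with (a + a) by ring. apply qp_add. Qed.

Lemma powS q k : q ^ (S k) = q * q ^ k.
Proof. reflexivity. Qed.

Lemma pow_bnd q k : 0 < q -> q < 1 -> 0 < q ^ k <= 1.
Proof. intros. induction k; simpl; [lra|]. split; nra. Qed.

Lemma qpoch_pos a q k : 0 < q -> q < 1 -> a < 1 -> 0 < qpoch a q k.
Proof.
  intros h0 h1 ha. induction k; simpl; [lra|]. apply Rmult_lt_0_compat; auto.
  pose proof (pow_bnd q k h0 h1). destruct (Rle_dec a 0); nra.
Qed.

Lemma qshift a b q k : b = a * q -> a <> 1 ->
  qpoch b q k = qpoch a q k * (1 - a * q ^ k) / (1 - a).
Proof.
  intros hb ha. assert (1 - a <> 0) by lra. induction k.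
  - simpl. field. auto.
  - rewrite !qpochS, IHk, hb. rewrite powS. field. auto.
Qed.

Lemma qdown a b q k : b = a * q -> qpoch a q (S k) = (1 - a) * qpoch b q k.
Proof.
  intros hb. induction k.
  - simpl. ring.
  - rewrite qpochS, IHk, qpochS, hb, powS. ring.
Qed.

Ltac qpn := rewrite ?S_INR; unfold Rminus;
  repeat (rewrite qp_add || rewrite qp_opp || rewrite qp_2);
  rewrite ?qp_nat, ?qp_1 by auto.

Lemma qp_two q : 0 < q -> qpow q 2 = q * q.
Proof. intro. replace 2 with (1 + 1) by ring. rewrite qp_add, qp_1; auto. Qed.

Lemma qpoch0 a q : qpoch a q 0 = 1.
Proof. reflexivity. Qed.

Ltac nz := match goal with |- ?e <> 0 => first [apply Rgt_not_eq; nra | apply Rlt_not_eq; nra | idtac] end.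


Definition wA1 q al be m := (1 - qpow q al * qpow q al * q ^ (S m) * q ^ (S m)) * (1 + qpow q al * qpow q be * q ^ (S m))
   / (1 - qpow q al * qpow q be * q ^ (S m) * q ^ (S m)).
Definition wA2 q al be m := - (qpow q al * (1 - q ^ (S m)) * (1 + q ^ (S m)) ^ 2)
   / (1 - qpow q al * qpow q be * q ^ (S m) * q ^ (S m)).

Lemma coefA q al be m (hq0 : 0 < q) (hq1 : q < 1) (hal : -1 < al) (hbe : -1 < be) k :
  shift q (qpow q al) (coefJ q (al + 1) be m) k
  = wA1 q al be m * coefJ q al be m k + wA2 q al be m * coefJ q al be (S m) k.
Proof.
  assert (hAq : qpow q al * q < 1).
  { rewrite <- (qp_1 q) at 2 by auto. rewrite <- qp_add. apply qp_lt1; auto; lra. }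
  assert (hBq : qpow q be * q < 1).
  { rewrite <- (qp_1 q) at 2 by auto. rewrite <- qp_add. apply qp_lt1; auto; lra. }
  pose proof (qp_pos q al). pose proof (qp_pos q be).
  pose proof (pow_bnd q m hq0 hq1).
  unfold shift, coefJ, wA1, wA2.
  qpn. rewrite !powS.
  set (A := qpow q al) in *. set (B := qpow q be) in *. set (M := q ^ m) in *.
  assert (a1 : 0 < A * q < 1) by (split; nra).
  assert (b1 : 0 < B * q < 1) by (split; nra).
  assert (m1 : 0 < M * q < 1) by (split; nra).
  assert (ab : 0 < A * q * (B * q) < 1) by (split; nra).
  assert (abm : 0 < M * q * (M * q) * A * B < 1).
  { replace (M * q * (M * q) * A * B) with (A * q * (B * q) * (M * M)) by ring.
    assert (0 < M * M <= 1) by (split; nra). split; nra. }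
  rewrite (qshift (A * q) (A * q * q) q m) by (ring || lra).
  assert (C1 := qpoch_pos (A * q) q m hq0 hq1 hAq).
  assert (C2 : 0 < qpoch (- (B * q)) q m) by (apply qpoch_pos; auto; lra).
  assert (C3 : 0 < qpoch q q m) by (apply qpoch_pos; auto).
  assert (C4 : 0 < qpoch (- q) q m) by (apply qpoch_pos; auto; lra).
  destruct k as [|j].
  { rewrite !qpochS, !qpoch0, ?pow_O, ?pow_1, ?powS; fold M. field; repeat split; nz. }
  rewrite (qdown (M * A * B * q) (M * q * A * B * q) q j) by ring.
  replace (M * (A * q) * B * q) with (M * q * A * B * q) by ring.
  rewrite !qpochS, !powS. fold M. set (K := q ^ j).
  pose proof (pow_bnd q j hq0 hq1) as HK. fold K in HK.
  assert (hM2 : / (M * q) <> 1).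
  { intro h. assert (M * q * / (M * q) = 1) by (field; nra). nra. }
  rewrite (qshift (/ (M * q)) (/ M) q j) by (try (field; nra); auto).
  rewrite (qshift (A * q) (A * q * q) q j) by (ring || lra).
  fold K.
  assert (Y1 := qpoch_pos (A * q) q j hq0 hq1 hAq).
  assert (Y2 : 0 < qpoch (- (B * q)) q j) by (apply qpoch_pos; auto; lra).
  assert (Y3 : 0 < qpoch q q j) by (apply qpoch_pos; auto).
  assert (Y4 : 0 < qpoch (- q) q j) by (apply qpoch_pos; auto; lra).
  assert (qK : 0 < q * K < 1) by (split; nra).
  assert (qqK : 0 < q * (q * K) < 1) by (split; nra).
  field. repeat split; nz.
Qed.

Definition wB1 q al be m := (1 - qpow q be * qpow q be * q ^ (S m) * q ^ (S m)) * (1 + qpow q al * qpow q be * q ^ (S m))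
   / (1 - qpow q al * qpow q be * q ^ (S m) * q ^ (S m)).
Definition wB2 q al be m := (qpow q be * (1 - q ^ (S m)) * (1 + q ^ (S m)) ^ 2)
   / (1 - qpow q al * qpow q be * q ^ (S m) * q ^ (S m)).

Lemma coefB q al be m (hq0 : 0 < q) (hq1 : q < 1) (hal : -1 < al) (hbe : -1 < be) k :
  shift q (- qpow q be) (coefJ q al (be + 1) m) k
  = wB1 q al be m * coefJ q al be m k + wB2 q al be m * coefJ q al be (S m) k.
Proof.
  assert (hAq : qpow q al * q < 1).
  { rewrite <- (qp_1 q) at 2 by auto. rewrite <- qp_add. apply qp_lt1; auto; lra. }
  assert (hBq : qpow q be * q < 1).
  { rewrite <- (qp_1 q) at 2 by auto. rewrite <- qp_add. apply qp_lt1; auto; lra. }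
  pose proof (qp_pos q al). pose proof (qp_pos q be).
  pose proof (pow_bnd q m hq0 hq1).
  unfold shift, coefJ, wB1, wB2.
  qpn. rewrite !powS.
  set (A := qpow q al) in *. set (B := qpow q be) in *. set (M := q ^ m) in *.
  assert (a1 : 0 < A * q < 1) by (split; nra).
  assert (b1 : 0 < B * q < 1) by (split; nra).
  assert (m1 : 0 < M * q < 1) by (split; nra).
  assert (ab : 0 < A * q * (B * q) < 1) by (split; nra).
  assert (abm : 0 < M * q * (M * q) * A * B < 1).
  { replace (M * q * (M * q) * A * B) with (A * q * (B * q) * (M * M)) by ring.
    assert (0 < M * M <= 1) by (split; nra). split; nra. }
  rewrite (qshift (- (B * q)) (- (B * q * q)) q m) by (ring || lra).
  assert (C1 := qpoch_pos (A * q) q m hq0 hq1 hAq).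
  assert (C2 : 0 < qpoch (- (B * q)) q m) by (apply qpoch_pos; auto; lra).
  assert (C3 : 0 < qpoch q q m) by (apply qpoch_pos; auto).
  assert (C4 : 0 < qpoch (- q) q m) by (apply qpoch_pos; auto; lra).
  destruct k as [|j].
  { rewrite !qpochS, !qpoch0, ?pow_O, ?pow_1, ?powS; fold M. field; repeat split; nz. }
  rewrite (qdown (M * A * B * q) (M * q * A * B * q) q j) by ring.
  replace (M * A * (B * q) * q) with (M * q * A * B * q) by ring.
  rewrite !qpochS, !powS. fold M. set (K := q ^ j).
  pose proof (pow_bnd q j hq0 hq1) as HK. fold K in HK.
  assert (hM2 : / (M * q) <> 1).
  { intro h. assert (M * q * / (M * q) = 1) by (field; nra). nra. }
  rewrite (qshift (/ (M * q)) (/ M) q j) by (try (field; nra); auto).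
  rewrite (qshift (- (B * q)) (- (B * q * q)) q j) by (ring || lra).
  fold K.
  assert (Y1 := qpoch_pos (A * q) q j hq0 hq1 hAq).
  assert (Y2 : 0 < qpoch (- (B * q)) q j) by (apply qpoch_pos; auto; lra).
  assert (Y3 : 0 < qpoch q q j) by (apply qpoch_pos; auto).
  assert (Y4 : 0 < qpoch (- q) q j) by (apply qpoch_pos; auto; lra).
  assert (qK : 0 < q * K < 1) by (split; nra).
  assert (qqK : 0 < q * (q * K) < 1) by (split; nra).
  field. repeat split; nz.
Qed.

Definition r1 q al be m := ((1 + qpow q (al + be + INR (S m))) * (1 + qpow q (al + be + INR (S m) + 1))
                  * (1 + qpow q (al + INR (S m))) * (1 + qpow q (be + INR (S m)))
                  * (1 - qpow q (al + INR (S m))) * (1 - qpow q (be + INR (S m)))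
                  / ((1 - qpow q (2 * INR (S m) + al + be))
                     * (1 - qpow q (2 * INR (S m) + al + be + 1)))).
Definition r2 q al be m := ((1 + qpow q (al + be + INR (S m) + 1)) * (1 + qpow q (al + be + 2 * INR (S m) + 1))
                  * (1 + q ^ (S m)) ^ 2 * (1 - q ^ (S m)) * (1 - qpow q (al - be))
                  / ((1 - qpow q (2 * INR (S m) + al + be))
                     * (1 - qpow q (2 * INR (S m) + al + be + 2)))
                  * qpow q be).
Definition r3 q al be m := ((1 + q ^ (S m)) ^ 2 * (1 + q ^ (S (S m))) ^ 2 * (1 - q ^ (S m)) * (1 - q ^ (S (S m)))
                 / ((1 - qpow q (2 * INR (S m) + al + be + 1))
                    * (1 - qpow q (2 * INR (S m) + al + be + 2)))
                 * qpow q (al + be)).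


Lemma Ssum_lin2 r1 r2 a b x q m :
  Cplus (Cmult (RtoC r1) (Ssum a x q m)) (Cmult (RtoC r2) (Ssum b x q m))
  = Ssum (fun k => r1 * a k + r2 * b k) x q m.
Proof.
  unfold Ssum. induction m.
  - simpl. rewrite RtoC_plus, !RtoC_mult. ring.
  - rewrite !csum_S, <- IHm. rewrite RtoC_plus, !RtoC_mult. ring.
Qed.

Lemma stepA q al be m x (hq0 : 0 < q) (hq1 : q < 1) (hal : -1 < al) (hbe : -1 < be) :
  Cmult (Cplus (Cminus (RtoC 1) (Cmult (RtoC (qpow q al)) (Cmult (RtoC (2 * qpow q (/ 2))) x)))
               (RtoC (qpow q al * qpow q al * q))) (qJacobiP q (al + 1) be m x)
  = Cplus (Cmult (RtoC (wA1 q al be m)) (qJacobiP q al be m x))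
          (Cmult (RtoC (wA2 q al be m)) (qJacobiP q al be (S m) x)).
Proof.
  rewrite !qJ_Ssum. rewrite mulL' by (auto; apply coefJ_vanish; auto).
  rewrite <- (Ssum_ext0 (coefJ q al be m) x q m) by (apply coefJ_vanish; auto).
  rewrite Ssum_lin2. apply Ssum_ext. intro k. apply coefA; auto.
Qed.

Lemma stepB q al be m x (hq0 : 0 < q) (hq1 : q < 1) (hal : -1 < al) (hbe : -1 < be) :
  Cmult (Cplus (Cminus (RtoC 1) (Cmult (RtoC (- qpow q be)) (Cmult (RtoC (2 * qpow q (/ 2))) x)))
               (RtoC (- qpow q be * - qpow q be * q))) (qJacobiP q al (be + 1) m x)
  = Cplus (Cmult (RtoC (wB1 q al be m)) (qJacobiP q al be m x))
          (Cmult (RtoC (wB2 q al be m)) (qJacobiP q al be (S m) x)).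
Proof.
  rewrite !qJ_Ssum. rewrite mulL' by (auto; apply coefJ_vanish; auto).
  rewrite <- (Ssum_ext0 (coefJ q al be m) x q m) by (apply coefJ_vanish; auto).
  rewrite Ssum_lin2. apply Ssum_ext. intro k. apply coefB; auto.
Qed.

Lemma rid q al be m (hq0 : 0 < q) (hq1 : q < 1) (hal : -1 < al) (hbe : -1 < be) :
  r1 q al be m = wB1 q (al + 1) be m * wA1 q al be m /\
  r2 q al be m = wB1 q (al + 1) be m * wA2 q al be m + wB2 q (al + 1) be m * wA1 q al be (S m) /\
  r3 q al be m = - (wB2 q (al + 1) be m * wA2 q al be (S m)).
Proof.
  assert (hAq : qpow q al * q < 1).
  { rewrite <- (qp_1 q) at 2 by auto. rewrite <- qp_add. apply qp_lt1; auto; lra. }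
  assert (hBq : qpow q be * q < 1).
  { rewrite <- (qp_1 q) at 2 by auto. rewrite <- qp_add. apply qp_lt1; auto; lra. }
  pose proof (qp_pos q al). pose proof (qp_pos q be).
  pose proof (pow_bnd q m hq0 hq1).
  unfold r1, r2, r3, wA1, wA2, wB1, wB2.
  qpn. rewrite !qp_two by auto. rewrite !powS.
  set (A := qpow q al) in *. set (B := qpow q be) in *. set (M := q ^ m) in *.
  assert (a1 : 0 < A * q < 1) by (split; nra).
  assert (b1 : 0 < B * q < 1) by (split; nra).
  assert (m1 : 0 < M * q < 1) by (split; nra).
  assert (ab : 0 < A * q * (B * q) < 1) by (split; nra).
  assert (mm : 0 < M * q * (M * q) < 1) by (split; nra).
  assert (abm : 0 < M * q * (M * q) * A * B < 1).
  { replace (M * q * (M * q) * A * B) with (A * q * (B * q) * (M * M)) by ring.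
    assert (0 < M * M <= 1) by (split; nra). split; nra. }
  split; [|split]; field; repeat split; nz.
Qed.

Theorem theorem2p1 (q al be : R) (hq0 : 0 < q) (hq1 : q < 1)
  (hal : -1 < al) (hbe : -1 < be) (n : nat) (hn : (1 <= n)%nat) (x : C) :
  Cmult (Cmult
     (Cplus (Cminus (RtoC 1) (Cmult (RtoC (2 * qpow q (al + / 2))) x))
            (RtoC (qpow q (2 * al + 1))))
     (Cplus (Cplus (RtoC 1) (Cmult (RtoC (2 * qpow q (be + / 2))) x))
            (RtoC (qpow q (2 * be + 1)))))
    (qJacobiP q (al + 1) (be + 1) (n - 1) x)
  =
  Cminus
   (Cplus
    (Cmult (RtoC ((1 + qpow q (al + be + INR n)) * (1 + qpow q (al + be + INR n + 1))
                  * (1 + qpow q (al + INR n)) * (1 + qpow q (be + INR n))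
                  * (1 - qpow q (al + INR n)) * (1 - qpow q (be + INR n))
                  / ((1 - qpow q (2 * INR n + al + be))
                     * (1 - qpow q (2 * INR n + al + be + 1)))))
           (qJacobiP q al be (n - 1) x))
    (Cmult (RtoC ((1 + qpow q (al + be + INR n + 1)) * (1 + qpow q (al + be + 2 * INR n + 1))
                  * (1 + q ^ n) ^ 2 * (1 - q ^ n) * (1 - qpow q (al - be))
                  / ((1 - qpow q (2 * INR n + al + be))
                     * (1 - qpow q (2 * INR n + al + be + 2)))
                  * qpow q be))
           (qJacobiP q al be n x)))
   (Cmult (RtoC ((1 + q ^ n) ^ 2 * (1 + q ^ (n + 1)) ^ 2 * (1 - q ^ n) * (1 - q ^ (n + 1))
                 / ((1 - qpow q (2 * INR n + al + be + 1))
                    * (1 - qpow q (2 * INR n + al + be + 2)))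
                 * qpow q (al + be)))
          (qJacobiP q al be (n + 1) x)).
Proof.
  destruct n as [|m]; [lia|].
  replace (S m - 1)%nat with m by lia.
  replace (S m + 1)%nat with (S (S m)) by lia.
  fold (r1 q al be m). fold (r2 q al be m). fold (r3 q al be m).
  destruct (rid q al be m hq0 hq1 hal hbe) as [E1 [E2 E3]].
  rewrite E1, E2, E3.
  set (z := Cmult (RtoC (2 * qpow q (/ 2))) x).
  assert (hF1 : Cplus (Cminus (RtoC 1) (Cmult (RtoC (2 * qpow q (al + / 2))) x))
            (RtoC (qpow q (2 * al + 1)))
          = Cplus (Cminus (RtoC 1) (Cmult (RtoC (qpow q al)) z)) (RtoC (qpow q al * qpow q al * q))).
  { replace (2 * al + 1) with (al + al + 1) by ring. rewrite !qp_add, qp_1 by auto.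
    unfold z. destruct x as [x1 x2]. apply injective_projections; simpl; ring. }
  assert (hF2 : Cplus (Cplus (RtoC 1) (Cmult (RtoC (2 * qpow q (be + / 2))) x))
            (RtoC (qpow q (2 * be + 1)))
          = Cplus (Cminus (RtoC 1) (Cmult (RtoC (- qpow q be)) z)) (RtoC (- qpow q be * - qpow q be * q))).
  { replace (2 * be + 1) with (be + be + 1) by ring. rewrite !qp_add, qp_1 by auto.
    unfold z. destruct x as [x1 x2]. apply injective_projections; simpl; ring. }
  rewrite hF1, hF2. rewrite <- Cmult_assoc. unfold z.
  rewrite stepB by (auto; lra).
  rewrite Cmult_plus_distr_l, !Cmult_assoc.
  rewrite !(Cmult_comm _ (RtoC (wB1 _ _ _ _))), !(Cmult_comm _ (RtoC (wB2 _ _ _ _))).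
  rewrite <- !Cmult_assoc.
  rewrite !stepA by auto.
  rewrite !RtoC_mult, RtoC_plus, RtoC_opp, !RtoC_mult.
  ring.
Qed.
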